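(* For every $n\ge 4$, if $G\sim G(n,1/2)$ then $\mathbb{P}(G\text{ is not even-degenerate})\ge (1/2)^{2n-3}$.
   Context: $G(n,1/2)$ is the uniformly random graph on $n$ labelled vertices. A graph $G$ on $n$ vertices is even-degenerate if there is an ordering $v_1,\dots,v_n$ of its vertices such that for each $1\le i\le n-2$, $v_i$ has an even number of neighbours in $\{v_{i+1},\dots,v_n\}$. *)

(* Defs.v *)
From HB Require Import structures.
From mathcomp Require Import all_boot all_order all_algebra all_fingroup.
Set Implicit Arguments. Unset Strict Implicit. Unset Printing Implicit Defensive.

(* A simple graph on the labelled vertex set 'I_n is encoded by its edge set:
   a set of ordered pairs (u, v) with u < v (one pair per unordered edge). *)
Definition graphs (n : nat) : {set {set 'I_n * 'I_n}} :=
  [set G : {set 'I_n * 'I_n} | [forall p in G, (p.1 < p.2)%N]].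

Definition adj (n : nat) (G : {set 'I_n * 'I_n}) (u v : 'I_n) : bool :=
  ((u, v) \in G) || ((v, u) \in G).

(* Even-degenerate: there is an ordering v_0, ..., v_{n-1} (given by the
   permutation s, v_i = s i) such that for every position i <= n-3
   (i.e. the paper's 1 <= i <= n-2), v_i has an even number of neighbours
   among v_{i+1}, ..., v_{n-1}. *)
Definition even_degenerate (n : nat) (G : {set 'I_n * 'I_n}) : bool :=
  [exists s : {perm 'I_n},
    [forall i : 'I_n, (i < n - 2)%N ==>
       ~~ odd #|[set j : 'I_n | (i < j)%N && adj G (s i) (s j)]| ]].

Definition prob_not_even_degenerate (n : nat) : rat :=
  (#|[set G in graphs n | ~~ even_degenerate G]|%:R / #|graphs n|%:R)%R.

(* Main.v *)
Require Import Defs.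
From HB Require Import structures.
From mathcomp Require Import all_boot all_order all_algebra all_fingroup.
From mathcomp Require Import zify.
Import GRing.Theory Num.Theory.
Set Implicit Arguments. Unset Strict Implicit. Unset Printing Implicit Defensive.

Definition deg n (G : {set 'I_n * 'I_n}) (u : 'I_n) := #|[set v | adj G u v]|.

Lemma adjC n (G : {set 'I_n * 'I_n}) u v : adj G u v = adj G v u.
Proof. by rewrite /adj orbC. Qed.

Lemma adj_irr n (G : {set 'I_n * 'I_n}) u : G \in graphs n -> adj G u u = false.
Proof.
rewrite inE => /forallP H; rewrite /adj orbb; apply/negP => Hu.
by move: (H (u, u)); rewrite Hu /= ltnn.
Qed.

Lemma not_ed n (G : {set 'I_n * 'I_n}) (wb : 'I_n) : 4 <= n -> G \in graphs n ->
  (forall u, odd (deg G u) || ((u == wb) && [forall v, ~~ adj G u v])) ->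
  ~~ even_degenerate G.
Proof.
move=> hn HG HQ; apply/existsP => -[s /forallP Hs].
have h0 : 0 < n by lia. have h1 : 1 < n by lia.
pose i0 := Ordinal h0. pose i1 := Ordinal h1.
have cardP : forall x, #|[set j | adj G x (s j)]| = deg G x.
  move=> x; rewrite /deg -(card_preimset [set v | adj G x v] (@perm_inj _ s)); apply: eq_card => j.
  by rewrite !inE.
have := Hs i0; rewrite /= (_ : 0 < n - 2) //=; last by lia.
have -> : [set j : 'I_n | (0 < j) && adj G (s i0) (s j)] = [set j | adj G (s i0) (s j)].
  apply/setP => j; rewrite !inE; case: (posnP j) => //= hj.
  have -> : j = i0 by apply: val_inj.
  by rewrite adj_irr.
rewrite cardP => e0.
have := HQ (s i0); rewrite (negbTE e0) /= => /andP [/eqP s0 /forallP iso].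
have := Hs i1; rewrite /= (_ : 1 < n - 2) //=; last by lia.
have -> : [set j : 'I_n | (1 < j) && adj G (s i1) (s j)] = [set j | adj G (s i1) (s j)].
  apply/setP => j; rewrite !inE; case: (ltnP 1 j) => //= hj.
  case: j hj => [[|[|j]] hj] //= _.
  - have -> : Ordinal hj = i0 by apply: val_inj.
    by rewrite adjC; apply/esym/negbTE/iso.
  - have -> : Ordinal hj = i1 by apply: val_inj.
    by rewrite adj_irr.
rewrite cardP => e1.
have := HQ (s i1); rewrite (negbTE e1) /= => /andP [/eqP s1 _].
have : s i0 = s i1 by rewrite s0 s1.
by move/perm_inj/(congr1 val).
Qed.

Section C.
Variable k : nat.
Local Notation N := k.+4.

Definition Low : {set 'I_N * 'I_N} := [set p : 'I_N * 'I_N | (p.1 < p.2) && (p.2 < k.+2)].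
Definition Pairs : {set 'I_N * 'I_N} := [set p : 'I_N * 'I_N | p.1 < p.2].
Definition wa : 'I_N := Ordinal (ltn_trans (ltnSn k.+2) (ltnSn k.+3)).
Definition wb : 'I_N := ord_max.
Definition EE (H : {set 'I_N * 'I_N}) := [set u : 'I_N | (u < k.+2) && ~~ odd (deg H u)].
Definition cmpl (H : {set 'I_N * 'I_N}) : {set 'I_N * 'I_N} :=
  [set p | (p \in H) || ((p.2 == wa) && (p.1 \in EE H)) || (~~ odd k && (p == (wa, wb)))].

Lemma degS n (G : {set 'I_n * 'I_n}) u : deg G u = \sum_v (adj G u v : nat).
Proof.
rewrite /deg -sum1_card big_mkcond /=; apply: eq_bigr => v _; rewrite inE.
by case: adj.
Qed.

Lemma sum_odd_card (I : finType) (f : I -> nat) :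
  \sum_i (odd (f i) : nat) = #|[set i | odd (f i)]|.
Proof.
rewrite -sum1_card [RHS]big_mkcond; apply: eq_bigr => i _; rewrite inE.
by case: odd.
Qed.

Lemma odd_sum (I : finType) (f : I -> nat) :
  odd (\sum_i f i) = odd #|[set i | odd (f i)]|.
Proof.
rewrite -sum_odd_card.
apply: (big_ind2 (fun x y => odd x = odd y)) => //.
  by move=> x1 x2 y1 y2 e1 e2; rewrite !oddD e1 e2.
by move=> i _; case: (odd (f i)).
Qed.

Lemma handshake (H : {set 'I_N * 'I_N}) : H \subset Pairs ->
  ~~ odd #|[set u | odd (deg H u)]|.
Proof.
move=> /subsetP HP; rewrite -odd_sum.
have -> : \sum_u deg H u = \sum_u \sum_v ((u, v) \in H : nat) + \sum_u \sum_v ((v, u) \in H : nat).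
  rewrite -big_split /=; apply: eq_bigr => u _; rewrite degS -big_split /=.
  apply: eq_bigr => v _; rewrite /adj.
  case e1: ((u, v) \in H); case e2: ((v, u) \in H) => //.
  have := HP _ e1; have := HP _ e2; rewrite !inE /=; lia.
rewrite [X in _ + X]exchange_big /= addnn odd_double //.
Qed.

Lemma card_lt m (h : m <= N) : #|[set u : 'I_N | u < m]| = m.
Proof.
have -> : [set u : 'I_N | u < m] = [set widen_ord h i | i : 'I_m].
  apply/setP => u; rewrite !inE; apply/idP/imsetP.
  - move=> hu; exists (Ordinal hu) => //; exact: val_inj.
  - by case=> i _ ->; rewrite /= ltn_ord.
rewrite card_imset ?card_ord //.
by move=> i j /(congr1 val) /= /val_inj.
Qed.

Lemma oddE (H : {set 'I_N * 'I_N}) : H \subset Low -> odd #|EE H| = odd k.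
Proof.
move=> HL.
have HP : H \subset Pairs.
  apply/subsetP => p /(subsetP HL); rewrite !inE => /andP [] //.
have deg0 : forall u : 'I_N, k.+2 <= u -> deg H u = 0.
  move=> u hu; apply/eqP; rewrite cards_eq0; apply/eqP/setP => v; rewrite !inE /adj.
  apply/negbTE; apply/negP => /orP [] /(subsetP HL); rewrite !inE /=; lia.
have := cardsID [set u | odd (deg H u)] [set u : 'I_N | u < k.+2].
rewrite card_lt; last by lia.
have -> : [set u : 'I_N | u < k.+2] :&: [set u | odd (deg H u)] = [set u | odd (deg H u)].
  apply/setP => u; rewrite !inE; case: (ltnP u k.+2) => //= hu.
  by rewrite deg0.
have -> : [set u : 'I_N | u < k.+2] :\: [set u | odd (deg H u)] = EE H.
  by apply/setP => u; rewrite !inE andbC.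
move=> e; have := handshake HP; have := congr1 odd e; rewrite oddD /=.
by case: (odd #|EE H|); case: (odd #|[set u | odd (deg H u)]|); case: (odd k).
Qed.

Lemma waE : val wa = k.+2. Proof. by []. Qed.
Lemma wbE : val wb = k.+3. Proof. by []. Qed.

Lemma EEl (H : {set 'I_N * 'I_N}) (u : 'I_N) : u \in EE H -> u < k.+2.
Proof. by rewrite inE => /andP []. Qed.

Lemma lowadj (H : {set 'I_N * 'I_N}) (u v : 'I_N) : H \subset Low -> k.+2 <= u -> adj H u v = false.
Proof.
move=> HL hu; apply/negbTE; apply/negP; rewrite /adj => /orP [] /(subsetP HL); rewrite !inE /=; lia.
Qed.

Lemma cmpl_graph (H : {set 'I_N * 'I_N}) : H \subset Low -> cmpl H \in graphs N.
Proof.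
move=> HL; rewrite inE; apply/forallP => p; apply/implyP; rewrite inE.
case/orP => [/orP [hp | /andP [/eqP e2 /EEl h1]] | /andP [_ /eqP ->]] //.
- by move: (subsetP HL _ hp); rewrite inE => /andP [].
- by rewrite e2 waE.
Qed.

Lemma ne_ord (a b : 'I_N) : val a != val b -> (a == b) = false.
Proof. by move=> h; apply/negbTE; apply: contra h => /eqP ->. Qed.

Lemma deg_low (H : {set 'I_N * 'I_N}) (u : 'I_N) : H \subset Low -> u < k.+2 ->
  deg (cmpl H) u = (u \in EE H) + deg H u.
Proof.
move=> HL hu.
have uwa : (u == wa) = false by apply: ne_ord; rewrite waE /=; lia.
have uwb : (u == wb) = false by apply: ne_ord; rewrite wbE /=; lia.
have Hwa : adj H u wa = false by rewrite adjC lowadj.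
rewrite /deg; case hE: (u \in EE H).
- rewrite (_ : nat_of_bool true = (wa \notin [set v | adj H u v])); last by rewrite inE Hwa.
  rewrite -cardsU1; apply: eq_card => v.
  move: hE; rewrite !inE /adj !inE /= !xpair_eqE uwa uwb /= !andbF !orbF => ->.
  by case: (v == wa); rewrite /= ?orbT ?orbF.
- apply: eq_card => v.
  move: hE; rewrite !inE /adj !inE /= !xpair_eqE uwa uwb /= !andbF !orbF => ->.
  by rewrite andbF orbF.
Qed.

Lemma deg_wa (H : {set 'I_N * 'I_N}) : H \subset Low ->
  deg (cmpl H) wa = (~~ odd k) + #|EE H|.
Proof.
move=> HL.
have h v := @lowadj H wa v HL (leqnn _).
have wawb : (wa == wb) = false by apply: ne_ord; rewrite /=; lia.
have wbE' : (wb \in EE H) = false by apply/negbTE/negP => /EEl; rewrite wbE; lia.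
rewrite /deg; case hk: (odd k) => /=.
- apply: eq_card => v; move: (h v); rewrite /adj !inE /= !xpair_eqE eqxx wawb /= ltnn /= hk /=.
  by move/negbT/norP => [/negbTE -> /negbTE ->]; rewrite !andbF /= !orbF.
- rewrite (_ : 1 = (wb \notin EE H)); last by rewrite wbE'.
  rewrite -cardsU1; apply: eq_card => v.
  move: (h v); rewrite /adj !inE /= !xpair_eqE eqxx wawb /= ltnn /= hk /=.
  move/negbT/norP => [/negbTE -> /negbTE ->]; rewrite !andbF /=. by rewrite orbF.
Qed.

Lemma adj_wb (H : {set 'I_N * 'I_N}) v : H \subset Low ->
  adj (cmpl H) wb v = ~~ odd k && (v == wa).
Proof.
move=> HL.
have h := @lowadj H wb v HL (leqnSn _).
have wawb : (wb == wa) = false by apply: ne_ord; rewrite /=; lia.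
have wbE' : (wb \in EE H) = false by apply/negbTE/negP => /EEl; rewrite wbE; lia.
move: h wbE'; rewrite /adj !inE /= !xpair_eqE eqxx wawb /= => /norP [/negbTE -> /negbTE ->].
rewrite /= => ->. rewrite !andbF /=.
by rewrite andbT.
Qed.

Lemma cmpl_Q (H : {set 'I_N * 'I_N}) : H \subset Low ->
  forall u, odd (deg (cmpl H) u) || ((u == wb) && [forall v, ~~ adj (cmpl H) u v]).
Proof.
move=> HL u.
have : u < k.+2 \/ u = wa \/ u = wb.
  have := ltn_ord u; case: (ltnP u k.+2) => hu hu'; first by left.
  right; case: (ltnP u k.+3) => hu2.
  - by left; apply: val_inj; rewrite /= ; lia.
  - by right; apply: val_inj; rewrite /= ; lia.
case=> [hu | [-> | ->]].
- rewrite deg_low // oddD inE hu /=.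
  by case: (odd (deg H u)).
- by rewrite (deg_wa HL) oddD (oddE HL); case: (odd k).
- case hk: (odd k).
  + rewrite eqxx /=; apply/orP; right; apply/forallP => v.
    by rewrite adj_wb // hk.
  + rewrite /deg (_ : [set v | adj (cmpl H) wb v] = [set wa]) ?cards1 //.
    by apply/setP => v; rewrite !inE adj_wb // hk.
Qed.

Lemma cmpl_inj (H : {set 'I_N * 'I_N}) : H \subset Low -> cmpl H :&: Low = H.
Proof.
move=> HL; apply/setP => p; rewrite inE; case hp: (p \in H).
- by rewrite (subsetP HL _ hp) inE hp.
- rewrite !inE hp /=; apply/negbTE/negP => /andP [/orP [/andP [/eqP e _] | /andP [_ /eqP e]] /andP [_]].
  + by rewrite e /=; lia.
  + by rewrite e /=; lia.
Qed.

Lemma top_card : #|Pairs :\: Low| <= 2 * N - 3.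
Proof.
have hA : k.+2 <= N by lia.
have hB : k.+3 <= N by lia.
pose A := [set (widen_ord hA i, wa) | i : 'I_k.+2].
pose B := [set (widen_ord hB i, wb) | i : 'I_k.+3].
have sub : Pairs :\: Low \subset A :|: B.
  apply/subsetP => -[x y]; rewrite !inE /= => /andP [h1 h2].
  have hy2 : k.+2 <= y by move: h1; rewrite h2 /= -leqNgt.
  have hy := ltn_ord y.
  case: (ltnP y k.+3) => hy3.
  - apply/orP; left; apply/imsetP.
    have hx : x < k.+2 by lia.
    exists (Ordinal hx) => //; congr pair; apply: val_inj => /=; lia.
  - apply/orP; right; apply/imsetP.
    have hx : x < k.+3 by lia.
    exists (Ordinal hx) => //; congr pair; apply: val_inj => /=; lia.
apply: (leq_trans (subset_leq_card sub)).
apply: (leq_trans (leq_card_setU A B)).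
have hAc : #|A| <= k.+2 by apply: (leq_trans (leq_imset_card _ _)); rewrite card_ord.
have hBc : #|B| <= k.+3 by apply: (leq_trans (leq_imset_card _ _)); rewrite card_ord.
lia.
Qed.

End C.

Lemma ratineq (L T b m : nat) : (T <= m)%N -> (2 ^ L <= b)%N ->
  ((1 / 2 : rat) ^+ m <= (b%:R / (2 ^ (L + T))%:R))%R.
Proof.
move=> hT hb.
apply: (Order.POrderTheory.le_trans (y := ((1/2 : rat) ^+ T)%R)).
  by apply: ler_wiXn2l.
have -> : ((1 / 2 : rat) ^+ T = (2 ^ L)%:R / (2 ^ (L + T))%:R)%R.
  rewrite expnD natrM natrX natrX invfM mulrA divff ?mul1r; last by rewrite expf_neq0.
  by rewrite exprVn.
apply: ler_wpM2r; first by rewrite invr_ge0 ler0n.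
by rewrite ler_nat.
Qed.

Theorem mainTheorem5 (n : nat) (hn : (4 <= n)%N) :
  ((1 / 2 : rat) ^+ (2 * n - 3) <= prob_not_even_degenerate n)%R.
Proof.
case: n hn => [|[|[|[|k]]]] // _.
rewrite /prob_not_even_degenerate.
have gP : graphs k.+4 = powerset (Pairs k).
  apply/setP => G; rewrite !inE; apply/forallP/subsetP.
  - by move=> h p hp; rewrite inE; move/implyP: (h p); apply.
  - by move=> h p; apply/implyP => hp; move: (h p hp); rewrite inE.
have LP : Low k \subset Pairs k.
  by apply/subsetP => p; rewrite !inE => /andP [].
have sz : #|Pairs k| = #|Low k| + #|Pairs k :\: Low k|.
  by rewrite -(cardsID (Low k) (Pairs k)) (setIidPr LP).
rewrite gP card_powerset sz.
apply: ratineq; first exact: top_card.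
rewrite -card_powerset.
have inj : {in powerset (Low k) &, injective (@cmpl k)}.
  move=> H1 H2; rewrite !inE => h1 h2 e.
  by rewrite -(cmpl_inj h1) -(cmpl_inj h2) e.
rewrite -(card_in_imset inj); apply: subset_leq_card.
apply/subsetP => G /imsetP [H]; rewrite inE => hH ->.
rewrite inE -gP; apply/andP; split; first exact: cmpl_graph.
apply: (not_ed (wb := wb k)) => //; first exact: cmpl_graph.
exact: cmpl_Q.
Qed.
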